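(* There exists a one-sided non-adaptive tester for $k$-monotonicity of functions $f\colon[n]\to\{0,1\}$ with query complexity $q(n,\varepsilon,k)=O(k/\varepsilon)$.
   Context: $[n]=\{1,\dots,n\}$ with its usual order. A function $f\colon[n]\to\{0,1\}$ is $k$-monotone if there do not exist $x_1\leq\cdots\leq x_{k+1}$ with $f(x_1)=1$ and $f(x_i)\neq f(x_{i+1})$ for all $i\in[k]$. Distance is normalized Hamming distance. A tester, given $\varepsilon$ and query access to $f$, accepts $k$-monotone $f$ with probability at least $2/3$ and rejects $f$ that is $\varepsilon$-far (distance at least $\varepsilon$) from every $k$-monotone function with probability at least $2/3$; one-sided means $k$-monotone functions are accepted with probability $1$; non-adaptive means queries do not depend on previous answers. *)

(* Defs.v *)
From HB Require Import structures.
From mathcomp Require Import all_boot all_order all_algebra.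
Set Implicit Arguments. Unset Strict Implicit. Unset Printing Implicit Defensive.
Import Order.TTheory GRing.Theory Num.Theory.

(* The domain [n] = {1,...,n} is represented by 'I_n = {0,...,n-1}
   with its usual (order-isomorphic) order. *)

Definition kmonotone (n k : nat) (f : 'I_n -> bool) : Prop :=
  ~ (exists x : nat -> 'I_n,
        f (x 0%N) = true /\
        (forall i : nat, (i < k)%N -> (x i <= x i.+1)%N /\ f (x i) <> f (x i.+1))).

Local Open Scope ring_scope.

Definition hdist (R : realFieldType) (n : nat) (f g : 'I_n -> bool) : R :=
  (#|[pred x | f x != g x]|)%:R / n%:R.

Definition far_from_kmonotone (R : realFieldType) (n k : nat) (eps : R)
    (f : 'I_n -> bool) : Prop :=
  forall g : 'I_n -> bool, kmonotone k g -> eps <= hdist R f g.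

(* A randomized non-adaptive tester with query bound q: a finite sample space
   Omega with probability weights p; on random outcome w it queries the
   points of the list Q w (at most q of them, chosen independently of f),
   and outputs D w f (true = accept), which depends only on f restricted
   to Q w. *)
Definition accept_prob (R : realFieldType) (n : nat) (Omega : finType)
    (p : Omega -> R) (D : Omega -> ('I_n -> bool) -> bool) (f : 'I_n -> bool) : R :=
  \sum_(w : Omega) p w * (D w f)%:R.

Definition one_sided_nonadaptive_tester (R : realFieldType) (n k : nat) (eps : R)
    (q : nat) (Omega : finType) (p : Omega -> R) (Q : Omega -> seq 'I_n)
    (D : Omega -> ('I_n -> bool) -> bool) : Prop :=
  [/\ (forall w, 0 <= p w) /\ \sum_(w : Omega) p w = 1,
      (forall w, (size (Q w) <= q)%N),
      (forall w (f g : 'I_n -> bool),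
          (forall x, x \in Q w -> f x = g x) -> D w f = D w g),
      (forall f, kmonotone k f -> accept_prob p D f = 1) &
      (forall f, far_from_kmonotone k eps f -> accept_prob p D f <= 1 / 3)].

(* Main.v *)
Require Import Defs.
From HB Require Import structures.
From mathcomp Require Import all_boot all_order all_algebra.
From mathcomp Require Import zify ring lra.
Import Order.TTheory GRing.Theory Num.Theory.
Set Implicit Arguments. Unset Strict Implicit. Unset Printing Implicit Defensive.

Definition liftb (n : nat) (h : 'I_n -> bool) (y : nat) : bool :=
  if insub y is Some i then h i else false.

Lemma liftbE n (h : 'I_n -> bool) (i : 'I_n) : liftb h i = h i.
Proof. by rewrite /liftb valK. Qed.

Lemma liftb_insubd n (h : 'I_n -> bool) (x0 : 'I_n) y : (y < n)%N ->
  liftb h y = h (insubd x0 y).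
Proof.
move=> hy; rewrite /liftb /insubd; case: insubP => [i _ _|] //=.
by rewrite hy.
Qed.

Fixpoint glen (k : nat) (s F : nat -> bool) (m : nat) : nat :=
  match m with
  | 0 => 0
  | m'.+1 => let l := glen k s F m' in
     if [&& s m', F m' == ~~ odd l & (l <= k)%N] then l.+1 else l
  end.

Definition Ab k (s F : nat -> bool) m :=
  (F m == ~~ odd (glen k s F m)) && (glen k s F m <= k)%N.

Lemma glenS k s F m : glen k s F m.+1 = (glen k s F m + (s m && Ab k s F m))%N.
Proof. rewrite /= /Ab; case: ifP => _; lia. Qed.

Lemma glen_le k s F m : (glen k s F m <= k.+1)%N.
Proof. elim: m => //= m IH; case: ifP => // /and3P[_ _ h]; lia. Qed.

Lemma glen_mono k s F m1 m2 : (m1 <= m2)%N -> (glen k s F m1 <= glen k s F m2)%N.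
Proof.
move=> h; rewrite -(subnKC h); elim: (m2 - m1)%N => [|d IH]; first by rewrite addn0.
rewrite addnS glenS; lia.
Qed.

Lemma glen_ext k (s1 s2 F1 F2 : nat -> bool) m :
  (forall y, (y < m)%N -> s1 y = s2 y /\ (s1 y -> F1 y = F2 y)) ->
  glen k s1 F1 m = glen k s2 F2 m.
Proof.
elim: m => //= m IH h.
rewrite IH; last by move=> y hy; apply: h; lia.
have [e1 e2] := h m (ltnSn m).
rewrite -e1; case: (s1 m) e2 => //= e2; by rewrite e2.
Qed.

Lemma sum_inc k (s F : nat -> bool) m :
  (\sum_(y < m) (s y && Ab k s F y))%N = glen k s F m.
Proof.
elim: m => [|m IH]; first by rewrite big_ord0.
by rewrite big_ord_recr /= IH -glenS.
Qed.

Lemma glen_chain k (s F : nat -> bool) m : exists c : nat -> nat, forall j, (j < glen k s F m)%N ->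
  [/\ (c j < m)%N, s (c j), F (c j) = ~~ odd j &
      ((j.+1 < glen k s F m)%N -> (c j < c j.+1)%N)].
Proof.
elim: m => [|m [c IH]]; first by exists (fun _ => 0%N).
rewrite /=; case: ifP => [/and3P[sm /eqP Fm hl]|_]; last first.
  exists c => j /IH [h1 h2 h3 h4]; split => //; lia.
exists (fun j => if j == glen k s F m then m else c j) => j hj.
case: eqP => [->|ne].
  split => //; lia.
have hj' : (j < glen k s F m)%N by lia.
have [h1 h2 h3 h4] := IH j hj'.
split => //; first lia.
move=> hj2; case: eqP => [_|ne2]; first lia.
apply: h4; lia.
Qed.

Definition gfun n k (S f : 'I_n -> bool) (x : 'I_n) : bool :=
  odd (glen k (liftb S) (liftb f) x.+1).

Lemma gfun_kmono n k (S f : 'I_n -> bool) :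
  (glen k (liftb S) (liftb f) n <= k)%N -> kmonotone k (gfun k S f).
Proof.
move=> hn [x [h0 hx]].
set l := fun i => glen k (liftb S) (liftb f) (x i).+1.
have key : forall i, (i <= k)%N -> (i < l i)%N.
  elim=> [_|i IH hi].
    move: h0; rewrite /gfun -/(l 0%N); case: (l 0%N) => //.
  have [h1 h2] := hx i hi.
  have IH' := IH (ltnW hi).
  have m : (l i <= l i.+1)%N by apply: glen_mono; lia.
  have ne : l i <> l i.+1 by move=> e; apply: h2; rewrite /gfun -/(l i) -/(l i.+1) e.
  lia.
have := key k (leqnn k).
have : (l k <= glen k (liftb S) (liftb f) n)%N by apply: glen_mono; have := ltn_ord (x k); lia.
lia.
Qed.

Lemma kmono_glen n k (S f : 'I_n -> bool) :
  kmonotone k f -> (glen k (liftb S) (liftb f) n <= k)%N.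
Proof.
move=> hk; rewrite leqNgt; apply/negP => hlt.
have [c hc] := glen_chain k (liftb S) (liftb f) n.
have [c0n _ _ _] := hc 0%N (leq_ltn_trans (leq0n k) hlt).
pose x0 : 'I_n := Ordinal c0n.
apply: hk; exists (fun i => insubd x0 (c i)).
have hc' : forall j, (j <= k)%N -> [/\ (c j < n)%N, liftb f (c j) = ~~ odd j &
      ((j < k)%N -> (c j < c j.+1)%N)].
  move=> j hj; have [a b d e] := hc j (leq_ltn_trans hj hlt); split => // hjk.
  apply: e; have := glen_le k (liftb S) (liftb f) n; lia.
split.
  have [a b _] := hc' 0%N (leq0n k); by rewrite -(liftb_insubd _ x0 a) b.
move=> i hi.
have [a b d] := hc' i (ltnW hi).
have [a' b' _] := hc' i.+1 hi.
split.
  rewrite !val_insubd a a'; have := d hi; lia.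
rewrite -(liftb_insubd _ x0 a) -(liftb_insubd _ x0 a') b b' /=.
by case: (odd i).
Qed.

Lemma err_bound n k (S f : 'I_n -> bool) :
  (glen k (liftb S) (liftb f) n <= k)%N ->
  (#|[pred x | f x != gfun k S f x]| <=
     \sum_(x : 'I_n) (~~ S x && Ab k (liftb S) (liftb f) x))%N.
Proof.
move=> hn; rewrite -sum1_card big_mkcond /=; apply: leq_sum => x _.
case: ifP => // hne.
rewrite inE /gfun glenS liftbE in hne.
have hl : (glen k (liftb S) (liftb f) x <= k)%N.
  apply: leq_trans hn; apply: glen_mono; exact: ltnW.
move: hne; rewrite /Ab liftbE hl andbT.
have E0 : forall l : nat, odd (l + 0) = odd l by move=> l; rewrite addn0.
have E1 : forall l : nat, odd (l + 1) = ~~ odd l by move=> l; rewrite addn1.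
case: (S x); case: (f x); case E: (odd (glen k (liftb S) (liftb f) x)) => /=;
  rewrite ?E0 ?E1 ?E //.
Qed.

Local Open Scope ring_scope.

Definition wt (R : realFieldType) (rho : R) (b : bool) : R := if b then rho else 1 - rho.
Definition pr (R : realFieldType) n (rho : R) (S : {ffun 'I_n -> bool}) : R :=
  \prod_y wt rho (S y).
Definition tog n (x : 'I_n) (S : {ffun 'I_n -> bool}) : {ffun 'I_n -> bool} :=
  [ffun y => if y == x then ~~ S y else S y].

Lemma pr_ge0 (R : realFieldType) n (rho : R) (S : {ffun 'I_n -> bool}) : 0 <= rho -> rho <= 1 -> 0 <= pr rho S :> R.
Proof.
move=> h0 h1; apply: prodr_ge0 => y _; rewrite /wt; case: (S y) => //; lra.
Qed.

Lemma sum_pr (R : realFieldType) n (rho : R) : \sum_(S : {ffun 'I_n -> bool}) pr rho S = 1.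
Proof.
rewrite /pr -(bigA_distr_bigA (fun (_ : 'I_n) b => wt rho b)) /=.
apply: big1 => y _; rewrite big_bool /wt /=; ring.
Qed.

Lemma togK n (x : 'I_n) : involutive (tog x).
Proof.
move=> S; apply/ffunP => y; rewrite /tog !ffunE; case: eqP => // ->.
by rewrite negbK.
Qed.

Lemma pr_tog (R : realFieldType) n (rho : R) (x : 'I_n) (S : {ffun 'I_n -> bool}) : S x ->
  pr rho (tog x S) * rho = (1 - rho) * pr rho S.
Proof.
move=> Sx; rewrite /pr (bigD1 x) //= [in RHS](bigD1 x) //= ffunE eqxx Sx /wt /=.
rewrite (eq_bigr (fun y => if S y then rho else 1 - rho)); last first.
  by move=> y /negbTE ne; rewrite ffunE ne.
ring.
Qed.

Lemma toggle_sum (R : realFieldType) n (rho : R) (x : 'I_n)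
    (A : {ffun 'I_n -> bool} -> bool) :
  rho != 0 -> (forall S, A (tog x S) = A S) ->
  \sum_S pr rho S * (~~ S x && A S)%:R =
  (1 - rho) / rho * \sum_S pr rho S * (S x && A S)%:R.
Proof.
move=> hr hA.
rewrite (reindex_inj (can_inj (togK x))) /= mulr_sumr.
apply: eq_bigr => S _; rewrite hA ffunE eqxx negbK.
case Sx: (S x) => /=; last by rewrite !mulr0.
have e := pr_tog rho Sx.
have -> : pr rho (tog x S) = (1 - rho) * pr rho S / rho.
  by rewrite -e mulfK.
ring.
Qed.

Lemma Ab_tog n k (f : 'I_n -> bool) (x : 'I_n) (S : {ffun 'I_n -> bool}) :
  Ab k (liftb (tog x S)) (liftb f) x = Ab k (liftb S) (liftb f) x.
Proof.
rewrite /Ab (@glen_ext k (liftb (tog x S)) (liftb S) (liftb f) (liftb f)) //.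
move=> y hy; split => //.
rewrite /liftb; case: insubP => [i _ vi|] //.
rewrite /tog ffunE; case: eqP => // e.
by move: hy; rewrite -vi e ltnn.
Qed.

Lemma sum_inc_ord n k (f : 'I_n -> bool) (S : {ffun 'I_n -> bool}) :
  (\sum_(x : 'I_n) (S x && Ab k (liftb S) (liftb f) x))%N = glen k (liftb S) (liftb f) n.
Proof.
rewrite -sum_inc; apply: eq_bigr => x _; by rewrite liftbE.
Qed.

Lemma exp_err (R : realFieldType) n k (rho : R) (f : 'I_n -> bool) :
  0 < rho -> rho <= 1 ->
  \sum_(S : {ffun 'I_n -> bool}) pr rho S *
     (\sum_(x : 'I_n) (~~ S x && Ab k (liftb S) (liftb f) x))%:R
  <= (1 - rho) / rho * (k.+1)%:R.
Proof.
move=> h0 h1.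
have hr : rho != 0 by rewrite gt_eqF.
under eq_bigr => S _ do rewrite natr_sum mulr_sumr.
rewrite exchange_big /=.
under eq_bigr => x _ do rewrite (@toggle_sum R n rho x (fun S => Ab k (liftb S) (liftb f) x) hr (Ab_tog k f x)).
rewrite -mulr_sumr; apply: ler_wpM2l.
  apply: divr_ge0; lra.
rewrite exchange_big /=.
under eq_bigr => S _ do rewrite -mulr_sumr -natr_sum sum_inc_ord.
apply: le_trans (_ : \sum_(S : {ffun 'I_n -> bool}) pr rho S * (k.+1)%:R <= _).
  apply: ler_sum => S _; apply: ler_wpM2l; first by apply: pr_ge0; lra.
  by rewrite ler_nat glen_le.
by rewrite -mulr_suml sum_pr mul1r.
Qed.

Lemma exp_mem (R : realFieldType) n (rho : R) (x : 'I_n) :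
  0 < rho -> \sum_(S : {ffun 'I_n -> bool}) pr rho S * (S x)%:R = rho.
Proof.
move=> h0; have hr : rho != 0 by rewrite gt_eqF.
have := @toggle_sum R n rho x (fun _ => true) hr (fun _ => erefl).
under eq_bigr => S _ do rewrite andbT.
under [X in _ = _ * X]eq_bigr => S _ do rewrite andbT.
move=> e.
have s1 : \sum_(S : {ffun 'I_n -> bool}) pr rho S * (~~ S x)%:R +
          \sum_(S : {ffun 'I_n -> bool}) pr rho S * (S x)%:R = 1.
  rewrite -big_split /= -[X in _ = X](@sum_pr R n rho); apply: eq_bigr => S _.
  by case: (S x); rewrite /= ?mulr0 ?mulr1 ?add0r ?addr0.
move: s1; rewrite e.
set a := \sum_(S : {ffun 'I_n -> bool}) pr rho S * (S x)%:R => s1.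
have : a = ((1 - rho) / rho * a + a) * rho by field.
by rewrite s1 mul1r.
Qed.

Lemma exp_card (R : realFieldType) n (rho : R) :
  0 < rho -> \sum_(S : {ffun 'I_n -> bool}) pr rho S * (#|[pred x | S x]|)%:R = n%:R * rho.
Proof.
move=> h0.
have cE : forall S : {ffun 'I_n -> bool}, #|[pred x | S x]| = (\sum_(x : 'I_n) S x)%N.
  move=> S; rewrite -sum1_card big_mkcond /=; apply: eq_bigr => x _.
  by rewrite inE; case: (S x).
under eq_bigr => S _ do rewrite cE natr_sum mulr_sumr.
rewrite exchange_big /=.
under eq_bigr => x _ do rewrite exp_mem //.
by rewrite sumr_const card_ord mulr_natl.
Qed.

Unset Implicit Arguments.

Theorem theorem1p4 (R : realFieldType) :
  exists C : R, 0 < C /\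
    forall (n k : nat) (eps : R), (1 <= k)%N -> 0 < eps -> eps <= 1 ->
      exists (q : nat) (Omega : finType) (p : Omega -> R)
             (Q : Omega -> seq 'I_n) (D : Omega -> ('I_n -> bool) -> bool),
        q%:R <= C * k%:R / eps /\
        one_sided_nonadaptive_tester k eps q p Q D.
Proof.
exists 72%:R; split; first by rewrite ltr0n.
move=> n k eps hk he he1.
have hkR : 1 <= k%:R :> R by rewrite ler1n.
have K1 : (k.+1)%:R = k%:R + 1 :> R by rewrite -natr1.
have exP : exists j, (n <= j)%N || (36%:R * (k.+1)%:R <= eps * (j.+1)%:R :> R).
  by exists n; rewrite leqnn.
have [q Pq qmin] := ex_minnP exP.
have qb : q%:R * eps <= 36%:R * (k.+1)%:R :> R.
  case: q Pq qmin => [|q'] Pq qmin; first by rewrite mul0r; apply: mulr_ge0; rewrite ler0n.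
  have nP : ~~ ((n <= q')%N || (36%:R * (k.+1)%:R <= eps * (q'.+1)%:R :> R)).
    apply/negP => /qmin; lia.
  move: nP; rewrite negb_or -ltNge => /andP[_ h]; rewrite mulrC; exact: ltW.
pose rho : R := if 6%:R * (k.+1)%:R <= eps * n%:R then 6%:R * (k.+1)%:R / (eps * n%:R) else 1.
have [r0 r1 r2 r3] : [/\ 0 < rho, rho <= 1, rho * (eps * n%:R) <= 6%:R * (k.+1)%:R &
    (1 - rho) * (k.+1)%:R * 6%:R <= rho * (eps * n%:R)].
  rewrite /rho; case: ifP => h.
    have hp : 0 < eps * n%:R.
      apply: lt_le_trans h; apply: mulr_gt0; rewrite ltr0n //.
    have e : 6%:R * (k.+1)%:R / (eps * n%:R) * (eps * n%:R) = 6%:R * (k.+1)%:R.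
      by rewrite mulfVK // gt_eqF.
    split.
    - apply: divr_gt0 => //; apply: mulr_gt0; rewrite ltr0n //.
    - by rewrite ler_pdivrMr // mul1r.
    - by rewrite e.
    - rewrite e; have : 0 <= 6%:R * (k.+1)%:R / (eps * n%:R) :> R.
        apply: divr_ge0; [apply: mulr_ge0; rewrite ler0n // | exact: ltW].
      move=> h0; rewrite [_ * 6%:R]mulrC mulrA [6%:R * (1 - _)]mulrC -mulrA.
      rewrite -[X in _ <= X]mul1r; apply: ler_wpM2r; first by apply: mulr_ge0; rewrite ler0n.
      lra.
  split; [lra | lra | | ].
  - rewrite mul1r; have h' : eps * n%:R < 6%:R * (k.+1)%:R by rewrite ltNge h.
    exact: ltW.
  - rewrite subrr !mul0r mul1r; apply: mulr_ge0; [exact: ltW | by rewrite ler0n].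
pose card (S : {ffun 'I_n -> bool}) := #|[pred x | S x]|.
exists q, {ffun 'I_n -> bool}, (pr rho).
exists (fun S => if (card S <= q)%N then enum [pred x | S x] else [::]).
exists (fun S g => if (card S <= q)%N then (glen k (liftb S) (liftb g) n <= k)%N else true).
split.
  rewrite ler_pdivlMr //.
  apply: (le_trans qb); rewrite K1; lra.
have pge0 : forall S : {ffun 'I_n -> bool}, 0 <= pr rho S by move=> S; apply: pr_ge0; lra.
split.
- split => //; exact: sum_pr.
- move=> S; case: ifP => // h; by rewrite -cardE.
- move=> S f g hfg; case: ifP => // hc; congr (_ <= k)%N.
  apply: glen_ext => y hy; split => // hS.
  move: hS; rewrite /liftb; case: insubP => [i _ _|] // hS.
  by apply: hfg; rewrite hc mem_enum.
- move=> f hf; rewrite /accept_prob -[RHS](@sum_pr R n rho); apply: eq_bigr => S _.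
  by case: ifP => _; rewrite ?kmono_glen ?mulr1.
move=> f hfar.
have n0 : (0 < n)%N.
  rewrite lt0n; apply/negP => /eqP n0.
  have kf : kmonotone k f by move=> [x _]; have := ltn_ord (x 0%N); rewrite [in X in (_ < X)%N]n0.
  have := hfar f kf; rewrite /hdist.
  have -> : (n%:R : R) = 0 by rewrite n0.
  rewrite invr0 mulr0; lra.
have nR : 0 < n%:R :> R by rewrite ltr0n.
have KR : 0 < (k.+1)%:R :> R by rewrite ltr0n.
set a := \sum_(S : {ffun 'I_n -> bool}) pr rho S * (q < card S)%:R.
set b := \sum_(S : {ffun 'I_n -> bool}) pr rho S * (glen k (liftb S) (liftb f) n <= k)%:R.
have hA : accept_prob (pr rho)
   (fun S g => if (card S <= q)%N then (glen k (liftb S) (liftb g) n <= k)%N else true) f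
   <= a + b.
  rewrite /accept_prob /a /b -big_split /=; apply: ler_sum => S _; rewrite -mulrDr.
  apply: ler_wpM2l; first exact: pge0.
  case: ifP => h; rewrite ltnNge h /= ?add0r //.
  by rewrite lerDl ler0n.
have a0 : 0 <= a by apply: sumr_ge0 => S _; apply: mulr_ge0; rewrite ?ler0n.
have b0 : 0 <= b by apply: sumr_ge0 => S _; apply: mulr_ge0; rewrite ?ler0n.
have T1 : a <= 1 / 6%:R.
  case/orP: Pq => [hnq | hq].
    rewrite /a big1; first lra.
    move=> S _; rewrite ltnNge.
    have -> : (card S <= q)%N.
      apply: leq_trans hnq; rewrite /card; apply: leq_trans (max_card _) _.
      by rewrite card_ord.
    by rewrite mulr0.
  have ha : a * (q.+1)%:R <= n%:R * rho.
    rewrite -(exp_card n r0) /a mulr_suml; apply: ler_sum => S _; rewrite -mulrA.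
    apply: ler_wpM2l; first exact: pge0.
    rewrite /card; case: ltnP => h /=.
      by rewrite mul1r ler_nat.
    by rewrite mul0r ler0n.
  have h1 : a * (q.+1)%:R * eps <= n%:R * rho * eps := ler_wpM2r (ltW he) ha.
  have h2 : a * (36%:R * (k.+1)%:R) <= a * (eps * (q.+1)%:R) := ler_wpM2l a0 hq.
  nra.
have T2 : b <= 1 / 6%:R.
  have hb : b * (eps * n%:R) <= (1 - rho) / rho * (k.+1)%:R.
    apply: le_trans _ (@exp_err R n k rho f r0 r1); rewrite /b mulr_suml.
    apply: ler_sum => S _; rewrite -mulrA; apply: ler_wpM2l; first exact: pge0.
    case: (leqP (glen k (liftb S) (liftb f) n) k) => h /=; last first.
      by rewrite mul0r ler0n.
    rewrite mul1r.
    have := hfar (gfun k S f) (gfun_kmono h); rewrite /hdist ler_pdivlMr // => he2.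
    apply: le_trans he2 _; rewrite ler_nat; exact: err_bound.
  have hb' : b * (eps * n%:R) * rho <= (1 - rho) * (k.+1)%:R.
    apply: le_trans (ler_wpM2r (ltW r0) hb) _.
    by rewrite mulrAC divfK ?gt_eqF.
  have X0 : 0 < rho * (eps * n%:R) by apply: mulr_gt0 => //; apply: mulr_gt0.
  nra.
lra.
Qed.
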